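(* Let $\{X_i\}_{i\ge1}$ be independent, identically distributed random variables on $((0,1),\mathcal{B},\mathcal{L})$, each exponentially distributed with rate $1$. For $t\ge1$ let $[t]_E=2k$ if $2k-1\le t<2k+1$, $k\in\mathbb{N}$. Define $D_1=[\exp(X_1)]_E$ and $D_{n+1}=\left[\frac{(D_n-1)(D_n+1)}{D_n}\exp(X_{n+1})\right]_E$ for $n\in\mathbb{N}$. Then $\{D_n\}_{n\ge1}$ is a time-homogeneous Markov chain with $\mathcal{L}(D_1=2k)=\frac{2}{(2k-1)(2k+1)}$ for $k\in\mathbb{N}$ and, for $k,l\in\mathbb{N}$ with $l\ge k$, $$\mathcal{L}(D_{n+1}=2l\mid D_n=2k)=\begin{cases}\frac{1}{2k},& l=k,\\ \frac{(2k-1)(2k+1)}{k(2l-1)(2l+1)},& l\ge k+1.\end{cases}$$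
   Context: $\mathcal{B}$ denotes the Borel $\sigma$-algebra of $(0,1)$ and $\mathcal{L}$ Lebesgue measure. *)

(* Defs.v *)
From HB Require Import structures.
From mathcomp Require Import all_boot all_order all_algebra.
From mathcomp Require Import all_classical all_reals all_analysis.
Set Implicit Arguments. Unset Strict Implicit. Unset Printing Implicit Defensive.
Import Order.TTheory GRing.Theory Num.Theory.
Local Open Scope classical_set_scope.
Local Open Scope ring_scope.

Definition Lprob (R : realType) (A : set R) : R :=
  fine (lebesgue_measure (A `&` (`]0%R, 1%R[%classic : set R))).

Definition Lcond (R : realType) (A B : set R) : R :=
  Lprob (A `&` B) / Lprob B.

Definition rv (R : realType) (Y : R -> R) : Prop :=
  measurable_fun (`]0%R, 1%R[%classic : set R) Y.

Definition indep_rvs (R : realType) (X : nat -> R -> R) : Prop :=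
  forall (s : seq nat) (B : nat -> set R),
    uniq s -> (forall i, i \in s -> measurable (B i)) ->
    Lprob [set w | forall i, i \in s -> B i (X i w)] =
    \prod_(i <- s) Lprob (X i @^-1` B i).

Definition exp1_distributed (R : realType) (Y : R -> R) : Prop :=
  forall x : R, Lprob [set w | Y w <= x] =
    (if 0 <= x then 1 - expR (- x) else 0).

(* [t]_E = 2k if 2k-1 <= t < 2k+1 (meaningful for t >= 1) *)
Definition evenE (R : realType) (t : R) : R :=
  2 * (Num.floor ((t + 1) / 2))%:~R.

(* D n = D_{n+1} of the paper (0-based): X 0 = X_1, X n = X_{n+1} *)
Fixpoint Dseq (R : realType) (X : nat -> R -> R) (n : nat) (w : R) : R :=
  match n with
  | 0 => evenE (expR (X 0%N w))
  | m.+1 => let d := Dseq X m w in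
            evenE ((d - 1) * (d + 1) / d * expR (X m.+1 w))
  end.

Definition markov_chain (R : realType) (D : nat -> R -> R) : Prop :=
  forall (n : nat) (s : nat -> R),
    0 < Lprob [set w | forall i, (i <= n)%N -> D i w = s i] ->
    Lcond [set w | D n.+1 w = s n.+1]
          [set w | forall i, (i <= n)%N -> D i w = s i] =
    Lcond [set w | D n.+1 w = s n.+1] [set w | D n w = s n].

Definition time_homogeneous (R : realType) (D : nat -> R -> R) : Prop :=
  forall (n m : nat) (a b : R),
    0 < Lprob [set w | D n w = a] -> 0 < Lprob [set w | D m w = a] ->
    Lcond [set w | D n.+1 w = b] [set w | D n w = a] =
    Lcond [set w | D m.+1 w = b] [set w | D m w = a].

(* Main.v *)
Require Import Defs.
From HB Require Import structures.
From mathcomp Require Import all_boot all_order all_algebra.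
From mathcomp Require Import all_classical all_reals all_analysis.
From mathcomp Require Import ring lra measurable_realfun.
Import Order.TTheory GRing.Theory Num.Theory.
Local Open Scope classical_set_scope.
Local Open Scope ring_scope.
Set Implicit Arguments. Unset Strict Implicit.


Section Prob.
Variable R : realType.
Local Notation I := (`]0%R, 1%R[%classic : set R).
Local Notation mu := (@lebesgue_measure R).
Local Notation P := (@Lprob R).
Definition meas (A : set R) := measurable (A `&` I).

Lemma mI : measurable I. Proof. exact: measurable_itv. Qed.

Lemma muI : mu I = 1%E.
Proof. by rewrite lebesgue_measure_itv /= lte_fin ltr01 oppr0 adde0. Qed.

Lemma mu_le1 A : meas A -> (mu (A `&` I) <= 1)%E.
Proof. move=> mA; rewrite -muI; apply: le_measure; rewrite ?inE; [exact: mA|exact: mI|exact: subIsetr]. Qed.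

Lemma muE A : meas A -> mu (A `&` I) = (P A)%:E.
Proof.
move=> mA; rewrite /Lprob fineK //; rewrite ge0_fin_numE ?measure_ge0 //.
by rewrite (le_lt_trans (mu_le1 mA)) // ltry.
Qed.

Lemma Lprob_ge0 A : 0 <= P A.
Proof. by rewrite /Lprob fine_ge0 // measure_ge0. Qed.

Lemma measU A B : meas A -> meas B -> meas (A `|` B).
Proof. by move=> mA mB; rewrite /meas setIUl; apply: measurableU. Qed.

Lemma measI A B : meas A -> meas B -> meas (A `&` B).
Proof.
move=> mA mB; rewrite /meas (_ : A `&` B `&` I = (A `&` I) `&` (B `&` I)).
  exact: measurableI.
by rewrite setIACA setIid.
Qed.

Lemma measC A : meas A -> meas (~` A).
Proof.
move=> mA; rewrite /meas (_ : ~` A `&` I = I `\` (A `&` I)).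
  by apply: measurableD => //; exact: mI.
apply/seteqP; split => x /=.
  by case => nA Ix; split => // -[Ax _]; exact: nA Ax.
by case => Ix nAI; split => // Ax; exact: nAI (conj Ax Ix).
Qed.

Lemma measT : meas setT. Proof. by rewrite /meas setTI; exact: mI. Qed.
Lemma meas0 : meas set0. Proof. by rewrite /meas set0I. Qed.

Lemma Lprob_le A B : meas A -> meas B -> A `<=` B -> P A <= P B.
Proof.
move=> mA mB AB; rewrite -lee_fin -!muE //; apply: le_measure; rewrite ?inE //.
exact: setSI.
Qed.

Lemma LprobU A B : meas A -> meas B -> A `&` B = set0 -> P (A `|` B) = P A + P B.
Proof.
move=> mA mB AB; apply: EFin_inj; rewrite EFinD -!muE //; last exact: measU.
rewrite setIUl measureU //.
by rewrite setIACA AB set0I.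
Qed.

Lemma LprobU_le A B : meas A -> meas B -> P (A `|` B) <= P A + P B.
Proof.
move=> mA mB; rewrite -lee_fin EFinD -!muE //; last exact: measU.
by rewrite setIUl; apply: measureU2.
Qed.

Lemma Lprob_null A B Z : meas A -> meas B -> meas Z -> P Z = 0 ->
  A `<=` B `|` Z -> B `<=` A -> P A = P B.
Proof.
move=> mA mB mZ Z0 ABZ BA; apply/eqP; rewrite eq_le (Lprob_le mB mA BA) andbT.
apply: (le_trans (Lprob_le mA (measU mB mZ) ABZ)).
by rewrite (le_trans (LprobU_le mB mZ)) // Z0 addr0.
Qed.

Lemma LprobT : P setT = 1.
Proof. by rewrite /Lprob setTI muI. Qed.

Lemma Lprob0 : P set0 = 0.
Proof. by rewrite /Lprob set0I measure0. Qed.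

Lemma LprobC A : meas A -> P (~` A) = 1 - P A.
Proof.
move=> mA; have := LprobU mA (measC mA) (setICr A).
by rewrite setUv LprobT => ->; rewrite addrC addKr.
Qed.

Lemma Lprob_le1 A : meas A -> P A <= 1.
Proof. by move=> mA; rewrite -LprobT; apply: Lprob_le => //; exact: measT. Qed.

End Prob.


Section Exp.
Variable R : realType.
Local Notation I := (`]0%R, 1%R[%classic : set R).
Local Notation P := (@Lprob R).

Definition Fexp (u : R) : R := if 0 <= u then 1 - expR (- u) else 0.

Lemma Fexp_ge u : 1 - expR (- u) <= Fexp u.
Proof.
rewrite /Fexp; case: ifPn => //; rewrite -ltNge => u0.
by rewrite subr_le0 -expR0 ler_expR oppr_ge0 ltW.
Qed.

Lemma measY (Y : R -> R) S : rv Y -> measurable S -> meas (Y @^-1` S).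
Proof. by move=> hY mS; rewrite /meas setIC; apply: hY => //; exact: mI. Qed.

Lemma meas_le u : measurable [set y : R | y <= u].
Proof.
rewrite (_ : [set y | y <= u] = `]-oo, u]%classic) //.
Qed.

Lemma meas_lt u : measurable [set y : R | y < u].
Proof.
rewrite (_ : [set y | y < u] = `]-oo, u[%classic) //.
Qed.

Lemma meas_gt u : measurable [set y : R | u < y].
Proof.
rewrite (_ : [set y | u < y] = `]u, +oo[%classic) //.
by apply/seteqP; split => y /=; rewrite in_itv /= andbT.
Qed.

Variable Y : R -> R.
Hypothesis hY : rv Y.
Hypothesis eY : exp1_distributed Y.

Lemma PY_le u : P (Y @^-1` [set y | y <= u]) = Fexp u.
Proof. exact: eY. Qed.

Lemma PY_eq u : P (Y @^-1` [set u]) = 0.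
Proof.
have m1 : meas (Y @^-1` [set u]) by apply: measY.
apply/eqP; rewrite eq_le Lprob_ge0 andbT leNgt; apply/negP => p0.
case: (leP 0 u) => u0; last first.
  have h : Y @^-1` [set u] `<=` Y @^-1` [set y | y <= u] by move=> w /= ->.
  have := Lprob_le m1 (measY hY (meas_le u)) h.
  rewrite PY_le; have -> : Fexp u = 0 by rewrite /Fexp leNgt u0.
  by rewrite leNgt p0.
set e := P (Y @^-1` [set u]) in p0 *.
pose d := ln (1 + e / 2).
have e2 : 0 < e / 2 by rewrite divr_gt0.
have d0 : 0 < d by rewrite /d ln_gt0 //; lra.
have md := measY hY (meas_le (u - d)).
have sub : (Y @^-1` [set u]) `|` (Y @^-1` [set y | y <= u - d]) `<=` Y @^-1` [set y | y <= u].
  by move=> w /= [->|/le_trans]; [|apply]; lra.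
have := Lprob_le (measU m1 md) (measY hY (meas_le u)) sub.
rewrite LprobU //; last first.
  by apply/seteqP; split => w //= [->] h; exfalso; lra.
rewrite !PY_le -/e => h.
have h1 := Fexp_ge (u - d).
have Fu : Fexp u = 1 - expR (- u) by rewrite /Fexp u0.
have Ed : expR d = 1 + e / 2 by rewrite /d lnK // posrE; lra.
have Eu : expR (- (u - d)) = expR (- u) * expR d by rewrite -expRD; congr expR; lra.
have x1 : expR (- u) <= 1 by rewrite -expR0 ler_expR; lra.
have x0 := expR_gt0 (- u).
rewrite Eu Ed in h1; rewrite Fu in h.
nra.
Qed.

End Exp.


Section Exp2.
Variable R : realType.
Local Notation P := (@Lprob R).

Section OneY.
Variable Y : R -> R.
Hypothesis hY : rv Y.
Hypothesis eY : exp1_distributed Y.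

Lemma PY_lt u : P (Y @^-1` [set y | y < u]) = Fexp u.
Proof.
rewrite -(PY_le eY) -[LHS]addr0 -(PY_eq hY eY u) -LprobU.
- congr Lprob; apply/seteqP; split => w /=; first by case=> h; [exact: ltW|rewrite h].
  by rewrite le_eqVlt => /orP[/eqP|]; [right|left].
- exact: measY (meas_lt u).
- exact: measY (measurable_set1 u).
- by apply/seteqP; split => w //= [h1 h2]; move: h1; rewrite h2 ltxx.
Qed.

Lemma PY_gt u : P (Y @^-1` [set y | u < y]) = 1 - Fexp u.
Proof.
rewrite -(PY_le eY) -LprobC; last exact: measY (meas_le u).
by congr Lprob; apply/seteqP; split => w /=; rewrite ltNge => /negP.
Qed.

Lemma PY_T : P (Y @^-1` setT) = 1.
Proof. exact: LprobT. Qed.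

Lemma PY_0 : P (Y @^-1` set0) = 0.
Proof. exact: Lprob0. Qed.

End OneY.

Definition HL (S : set R) := S = set0 \/ S = setT \/
  (exists u, S = [set y | y < u]) \/ (exists u, S = [set y | u < y]).

Lemma HL_meas S : HL S -> measurable S.
Proof.
case=> [->//|[->//|[[u ->]|[u ->]]]]; [exact: meas_lt|exact: meas_gt].
Qed.

Lemma PY_HL (Y Z : R -> R) S : rv Y -> exp1_distributed Y ->
  rv Z -> exp1_distributed Z -> HL S -> P (Y @^-1` S) = P (Z @^-1` S).
Proof.
move=> hY eY hZ eZ; case=> [->|[->|[[u ->]|[u ->]]]].
- by rewrite !PY_0.
- by rewrite !PY_T.
- by rewrite !PY_lt.
- by rewrite !PY_gt.
Qed.

Lemma HL_cexp c t : HL [set x | c * expR x < t].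
Proof.
case: (ltgtP c 0) => c0.
- case: (leP 0 t) => t0.
    right; left; apply/seteqP; split => x //= _.
    by have := expR_gt0 x; nra.
  have tc : 0 < t / c by rewrite ltr_ndivlMr // mul0r.
  right; right; right; exists (ln (t / c)); apply/seteqP; split => x /= h.
    by rewrite -ltr_expR lnK ?posrE // ltr_ndivrMr // mulrC.
  by move: h; rewrite -ltr_expR lnK ?posrE // ltr_ndivrMr // mulrC.
- case: (leP t 0) => t0.
    left; apply/seteqP; split => x //= h.
    by have := expR_gt0 x; nra.
  have tc : 0 < t / c by rewrite divr_gt0.
  right; right; left; exists (ln (t / c)); apply/seteqP; split => x /= h.
    by rewrite -ltr_expR lnK ?posrE // ltr_pdivlMr // mulrC.
  by move: h; rewrite -ltr_expR lnK ?posrE // ltr_pdivlMr // mulrC.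
- rewrite c0; case: (ltP 0 t) => t0.
    by right; left; apply/seteqP; split => x //= _; rewrite mul0r.
  by left; apply/seteqP; split => x //=; rewrite mul0r => h; lra.
Qed.

End Exp2.


Section Even.
Variable R : realType.
Local Notation P := (@Lprob R).

Lemma evenE_eq (t b : R) : evenE t = b <->
  exists z : int, b = 2 * z%:~R /\ b - 1 <= t /\ t < b + 1.
Proof.
split.
  move=> <-; exists (Num.floor ((t + 1) / 2)); split => //.
  have := floor_itv ((t + 1) / 2); rewrite intrD /=.
  set f := ((Num.floor _)%:~R : R) => /andP[h1 h2].
  have e1 : (1%:~R : R) = 1 by [].
  rewrite e1 in h2; rewrite /evenE -/f; lra.
case=> z [-> [h1 h2]]; rewrite /evenE; congr (_ * _); congr intr.
apply/eqP; rewrite floor_eq intrD (_ : (1%:~R : R) = 1) //; apply/andP; split; lra.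
Qed.

Lemma evenE_ge (t : R) (z : int) : 2 * z%:~R - 1 <= t -> 2 * z%:~R <= evenE t.
Proof.
move=> h; rewrite /evenE ler_pM2l // ler_int floor_ge_int; lra.
Qed.

Lemma evenE_int (t : R) : exists z : int, evenE t = 2 * z%:~R.
Proof. by exists (Num.floor ((t + 1) / 2)). Qed.

Lemma evenE_nd : {homo (@evenE R) : x y / x <= y}.
Proof.
move=> x y xy; rewrite /evenE ler_pM2l // ler_int le_floor //.
by rewrite ler_pM2r // lerD2r.
Qed.

Definition Aset (c b : R) := [set x : R | evenE (c * expR x) = b].

Lemma Aset_meas c b : measurable (Aset c b).
Proof.
have m : measurable_fun setT (fun x : R => evenE (c * expR x)).
  apply: (measurableT_comp (f := @evenE R)).
    by apply: nondecreasing_measurable => //; exact: evenE_nd.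
  apply: measurable_funM => //; exact: measurable_expR.
rewrite (_ : Aset c b = setT `&` (fun x => evenE (c * expR x)) @^-1` [set b]).
  by apply: m => //.
by rewrite setTI.
Qed.

End Even.


Section ASet.
Variable R : realType.
Local Notation P := (@Lprob R).

Definition is2Z (b : R) := exists z : int, b = 2 * z%:~R.

Lemma Aset_split (c b : R) : is2Z b ->
  Aset c b = [set x | c * expR x < b + 1] `\` [set x | c * expR x < b - 1].
Proof.
move=> [z bz]; apply/seteqP; split => x /=.
  by move/evenE_eq => [z' [_ [h1 h2]]]; split => //; lra.
move=> [h1 h2]; apply/evenE_eq; exists z; split => //; split => //; lra.
Qed.

Lemma Aset_empty (c b : R) : ~ is2Z b -> Aset c b = set0.
Proof.
move=> nb; apply/seteqP; split => x //= /evenE_eq [z [bz _]]; apply: nb; by exists z.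
Qed.

Lemma LprobD (A B : set R) : meas A -> meas B -> B `<=` A -> P (A `\` B) = P A - P B.
Proof.
move=> mA mB BA; apply/eqP; rewrite eq_sym subr_eq; apply/eqP.
rewrite -LprobU //; first by rewrite setUC setDUK.
- by rewrite setDE; apply: measI => //; apply: measC.
- by rewrite setDE -setIA setICl setI0.
Qed.

Lemma PA_indep (Y Z : R -> R) c b : rv Y -> exp1_distributed Y ->
  rv Z -> exp1_distributed Z -> P (Y @^-1` Aset c b) = P (Z @^-1` Aset c b).
Proof.
move=> hY eY hZ eZ; have [b2|nb2] := pselect (is2Z b); last first.
  by rewrite Aset_empty.
rewrite Aset_split //.
have sub : [set x | c * expR x < b - 1] `<=` [set x | c * expR x < b + 1].
  by move=> x /=; lra.
have h (W : R -> R) : rv W -> P (W @^-1` ([set x | c * expR x < b + 1] `\` [set x | c * expR x < b - 1]))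
  = P (W @^-1` [set x | c * expR x < b + 1]) - P (W @^-1` [set x | c * expR x < b - 1]).
  move=> hW; rewrite -LprobD //.
  - by apply: measY => //; apply: HL_meas; apply: HL_cexp.
  - by apply: measY => //; apply: HL_meas; apply: HL_cexp.
  - by move=> w /=; lra.
rewrite (h Y hY) (h Z hZ) (PY_HL hY eY hZ eZ (HL_cexp c (b + 1))).
by rewrite (PY_HL hY eY hZ eZ (HL_cexp c (b - 1))).
Qed.

Definition Gc (c t : R) : R := if t <= 0 then 0 else if 1 <= t / c then 1 - c / t else 0.

Lemma PY_cexp (Y : R -> R) c t : rv Y -> exp1_distributed Y -> 0 < c ->
  P (Y @^-1` [set x | c * expR x < t]) = Gc c t.
Proof.
move=> hY eY c0; rewrite /Gc; case: (leP t 0) => t0.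
  rewrite (_ : [set x | c * expR x < t] = set0) ?PY_0 //.
  by apply/seteqP; split => x //= h; have := expR_gt0 x; nra.
have tc : 0 < t / c by rewrite divr_gt0.
rewrite (_ : [set x | c * expR x < t] = [set y | y < ln (t / c)]); last first.
  apply/seteqP; split => x /= h.
    by rewrite -ltr_expR lnK ?posrE // ltr_pdivlMr // mulrC.
  by move: h; rewrite -ltr_expR lnK ?posrE // ltr_pdivlMr // mulrC.
rewrite (PY_lt hY eY) /Fexp.
have -> : (0 <= ln (t/c)) = (1 <= t/c) by rewrite -ln1 ler_ln // posrE.
case: ifPn => // _; rewrite expRN lnK ?posrE // invf_div //.
Qed.

End ASet.


Section Main.
Variable R : realType.
Local Notation I := (`]0%R, 1%R[%classic : set R).
Local Notation P := (@Lprob R).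

Lemma inv_meas : measurable_fun setT (@GRing.inv R).
Proof.
rewrite -(setvU [set (0:R)]); apply/measurable_funU => //.
  exact: measurableC.
split; last exact: measurable_fun_set1.
apply: open_continuous_measurable_fun.
  apply: closed_openC.
  exact/accessible_closed_set1/hausdorff_accessible/Rhausdorff.
move=> x; rewrite inE /= => x0; apply: inv_continuous; exact/eqP.
Qed.

Definition gfun (d : R) := (d - 1) * (d + 1) / d.

Lemma gfun_meas : measurable_fun setT gfun.
Proof.
apply: measurable_funM; last exact: inv_meas.
apply: measurable_funM.
  by apply: measurable_funB => //; exact: measurable_cst.
by apply: measurable_funD => //; exact: measurable_cst.
Qed.

Variable X : nat -> R -> R.
Hypothesis Xrv : forall i, rv (X i).
Hypothesis Xind : indep_rvs X.
Hypothesis Xexp : forall i, exp1_distributed (X i).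

Local Notation D := (Dseq X).

Lemma DS n w : D n.+1 w = evenE (gfun (D n w) * expR (X n.+1 w)).
Proof. by []. Qed.

Lemma D0E w : D 0 w = evenE (1 * expR (X 0 w)).
Proof. by rewrite mul1r. Qed.

Lemma measD n : measurable_fun I (D n).
Proof.
have me : measurable_fun setT (@evenE R).
  by apply: nondecreasing_measurable => //; exact: evenE_nd.
elim: n => [|n IH].
  rewrite (_ : D 0 = @evenE R \o (expR \o X 0)) //.
  apply: measurableT_comp => //.
  by apply: measurableT_comp; [exact: measurable_expR|exact: (Xrv 0)].
rewrite (_ : D n.+1 = @evenE R \o ((gfun \o D n) \* (expR \o X n.+1))) //.
apply: measurableT_comp => //.
apply: measurable_funM.
  by apply: measurableT_comp; [exact: gfun_meas|exact: IH].
by apply: measurableT_comp; [exact: measurable_expR|exact: (Xrv _)].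
Qed.

Lemma measDS n S : measurable S -> meas (D n @^-1` S).
Proof. by move=> mS; rewrite /meas setIC; apply: measD => //; exact: mI. Qed.

Definition E n (a : R) := [set w | D n w = a].

Lemma measE n a : meas (E n a).
Proof. exact: measDS (measurable_set1 a). Qed.

Definition rect (s : seq nat) (B : nat -> set R) :=
  [set w | forall i, i \in s -> B i (X i w)].

Lemma meas_rect s B : (forall i, i \in s -> measurable (B i)) -> meas (rect s B).
Proof.
elim: s => [|i s IH] hB.
  rewrite (_ : rect [::] B = setT); first exact: measT.
  by apply/seteqP; split => w //= _ i; rewrite in_nil.
rewrite (_ : rect (i :: s) B = X i @^-1` B i `&` rect s B).
  apply: measI; first by apply: measY => //; apply: hB; rewrite mem_head.
  by apply: IH => j js; apply: hB; rewrite in_cons js orbT.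
apply/seteqP; split => w /=.
  by move=> h; split => [|j js]; apply: h; rewrite in_cons ?eqxx ?js ?orbT.
by move=> [h1 h2] j; rewrite in_cons => /orP[/eqP ->|/h2].
Qed.

Lemma rect_nil B : rect [::] B = setT.
Proof. by apply/seteqP; split => w //= _ i; rewrite in_nil. Qed.

Lemma Lprob_rect s B : uniq s -> (forall i, i \in s -> measurable (B i)) ->
  P (rect s B) = \prod_(i <- s) P (X i @^-1` B i).
Proof. exact: Xind. Qed.

Lemma PX_le0 i : P (X i @^-1` [set y | y <= 0]) = 0.
Proof. by rewrite (PY_le (Xexp i)) /Fexp lexx oppr0 expR0 subrr. Qed.

Lemma int_ge1 (z : int) : 0 < 2 * (z%:~R : R) -> 1 <= (z%:~R : R).
Proof.
move=> h; have : (0 : R) < z%:~R by lra.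
by rewrite ltr0z gtz0_ge1 -(ler_int R).
Qed.

Lemma step_ge n w : 0 < D n w -> 0 < X n.+1 w -> D n w <= D n.+1 w.
Proof.
move=> d0 x0.
have [z dz'] : exists z : int, D n w = 2 * z%:~R.
  by case: (n) => [|m]; apply: evenE_int.
rewrite DS dz'; apply: evenE_ge; rewrite -dz'.
have z1 : 1 <= (z%:~R : R) by apply: int_ge1; rewrite -dz'.
have e1 : 1 < expR (X n.+1 w) by rewrite expR_gt1.
set d := D n w in dz' *.
have d2 : 2 <= d by lra.
have dn0 : d != 0 by rewrite gt_eqF //; lra.
have gd : gfun d = d - d^-1 by rewrite /gfun; field.
have di : d^-1 <= 1/2.
  rewrite -div1r ler_pdivrMr; last by lra.
  lra.
have g0 : 0 <= gfun d by rewrite gd; lra.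
have := ler_peMr g0 (ltW e1).
set g := gfun d in gd g0 *; set e := expR _ in e1 *.
move=> h; lra.
Qed.

Lemma Dle0 n : P [set w | D n w <= 0] = 0.
Proof.
have mle : forall m, meas [set w | D m w <= 0] by move=> m; exact: measDS (meas_le 0).
elim: n => [|n IH].
  apply/eqP; rewrite eq_le Lprob_ge0 andbT -[leRHS](PX_le0 0).
  apply: (Lprob_le (mle 0) (measY (Xrv 0) (meas_le 0))).
  move=> w /= h; rewrite leNgt; apply/negP => x0.
  have := @evenE_ge R (expR (X 0 w)) 1.
  rewrite (_ : ((1:int)%:~R : R) = 1) // mulr1.
  have e1 : 1 < expR (X 0 w) by rewrite expR_gt1.
  move=> /(_ ltac:(lra)); move: h; lra.
apply/eqP; rewrite eq_le Lprob_ge0 andbT.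
have mX : meas (X n.+1 @^-1` [set y | y <= 0]) by apply: measY => //; exact: meas_le.
apply: (le_trans (Lprob_le (mle _) (measU (mle n) mX) _)).
  move=> w /= h; case: (leP (D n w) 0) => hd; first by left.
  case: (leP (X n.+1 w) 0) => hx; first by right.
  by have := step_ge hd hx; rewrite DS; lra.
by rewrite (le_trans (LprobU_le (mle n) mX)) // IH PX_le0 addr0.
Qed.

End Main.


Section Main2.
Variable R : realType.
Local Notation P := (@Lprob R).

Definition U N (F : nat -> set R) := [set w | exists2 j, (j < N)%N & F j w].

Lemma measU_big N F : (forall j, meas (F j)) -> meas (U N F).
Proof.
move=> mF; elim: N => [|N IH].
  rewrite (_ : U 0 F = set0); first exact: meas0.
  by apply/seteqP; split => w // [].
rewrite (_ : U N.+1 F = U N F `|` F N); first exact: measU.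
apply/seteqP; split => w /=.
  by case=> j; rewrite ltnS leq_eqVlt => /orP[/eqP ->|jN]; [right|left; exists j].
by case=> [[j jN Fj]|FN]; [exists j => //; exact: ltnW|exists N].
Qed.

Lemma LprobU_big N F : (forall j, meas (F j)) ->
  (forall i j, i != j -> F i `&` F j = set0) ->
  P (U N F) = \sum_(j < N) P (F j).
Proof.
move=> mF dF; elim: N => [|N IH].
  by rewrite big_ord0 (_ : U 0 F = set0) ?Lprob0 //; apply/seteqP; split => w // [].
rewrite big_ord_recr /= -IH -LprobU //; first last.
- apply/seteqP; split => w //= [[j jN Fj] FN].
  have jN' : j != N by rewrite ltn_eqF.
  by have := dF j N jN'; move/seteqP => [/(_ w (conj Fj FN))].
- exact: measU_big.
congr Lprob; apply/seteqP; split => w /=.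
  by case=> j; rewrite ltnS leq_eqVlt => /orP[/eqP ->|jN]; [right|left; exists j].
by case=> [[j jN Fj]|FN]; [exists j => //; exact: ltnW|exists N].
Qed.

Variable X : nat -> R -> R.
Hypothesis Xrv : forall i, rv (X i).
Hypothesis Xind : indep_rvs X.
Hypothesis Xexp : forall i, exp1_distributed (X i).
Local Notation D := (Dseq X).
Local Notation E := (E X).
Local Notation rect := (rect X).

Lemma rect_cons i s B : rect (i :: s) B = X i @^-1` B i `&` rect s B.
Proof.
apply/seteqP; split => w /=.
  by move=> h; split => [|j js]; apply: h; rewrite in_cons ?eqxx ?js ?orbT.
by move=> [h1 h2] j; rewrite in_cons => /orP[/eqP ->|/h2].
Qed.

Definition Bup (i0 : nat) (A : set R) (B : nat -> set R) :=
  fun i => if i == i0 then A else B i.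

Lemma rect_upd i0 A s B : i0 \notin s ->
  rect (i0 :: s) (Bup i0 A B) = X i0 @^-1` A `&` rect s B.
Proof.
move=> ns; rewrite rect_cons /Bup eqxx; congr (_ `&` _).
apply/seteqP; split => w /= h i iS; have := h i iS;
  by case: eqP => // ei; move: ns; rewrite -ei iS.
Qed.

Lemma Prect_upd i0 A s B : uniq s -> i0 \notin s -> measurable A ->
  (forall i, i \in s -> measurable (B i)) ->
  P (X i0 @^-1` A `&` rect s B) = P (X i0 @^-1` A) * P (rect s B).
Proof.
move=> us ns mA mB.
have mB' : forall i, i \in i0 :: s -> measurable (Bup i0 A B i).
  by move=> i; rewrite in_cons /Bup; case: eqP => // _ /= /mB.
rewrite -rect_upd // (Lprob_rect Xind) /= ?ns // big_cons /Bup eqxx.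
rewrite (Lprob_rect Xind) //; congr (_ * _); apply: eq_big_seq => i iS.
by case: eqP => // ei; move: ns; rewrite -ei iS.
Qed.

Definition Z n := [set w | D n w <= 0] `|` X n.+1 @^-1` [set y | y <= 0].

Lemma measZ n : meas (Z n).
Proof.
apply: measU; first exact: (measDS Xrv n (meas_le 0)).
by apply: measY => //; exact: meas_le.
Qed.

Lemma PZ n : P (Z n) = 0.
Proof.
apply/eqP; rewrite eq_le Lprob_ge0 andbT.
apply: (le_trans (LprobU_le _ _)).
- exact: (measDS Xrv n (meas_le 0)).
- by apply: measY => //; exact: meas_le.
by rewrite (Dle0 Xrv Xexp) PX_le0 // addr0.
Qed.

Definition aj (j : nat) : R := 2 * j.+1%:R.

Definition Fj n b s B j := E n (aj j) `&` X n.+1 @^-1` Aset (gfun (aj j)) b `&` rect s B.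

Lemma measFj n b s B j : (forall i, i \in s -> measurable (B i)) -> meas (Fj n b s B j).
Proof.
move=> mB; apply: measI; last exact: meas_rect.
apply: measI; first exact: measE.
by apply: measY => //; exact: Aset_meas.
Qed.

Lemma Fj_disj n b s B i j : i != j -> Fj n b s B i `&` Fj n b s B j = set0.
Proof.
move=> ij; apply/seteqP; split => w // [[[h1 _] _] [[h2 _] _]].
move: ij h1 h2; rewrite /E /aj /= => ij -> h2.
have n2 : (2:R) != 0 by rewrite pnatr_eq0.
by move/(mulfI n2)/eqP: h2; rewrite eqr_nat eqSS (negbTE ij).
Qed.

Lemma decomp_sub n b s B j : Fj n b s B j `<=` E n.+1 b `&` rect s B.
Proof.
move=> w [[h1 h2] h3]; split => //; move: h1 h2; rewrite /E /Aset /= => h1 h2.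
by rewrite h1; exact: h2.
Qed.

Lemma decomp_sup n b s B :
  E n.+1 b `&` rect s B `<=` U (Num.trunc b) (Fj n b s B) `|` Z n.
Proof.
move=> w /= [hb hr].
case: (leP (D n w) 0) => hd; first by right; left.
case: (leP (X n.+1 w) 0) => hx; first by right; right.
left; have hle := step_ge hd hx; rewrite hb in hle.
have [z dz] : exists z : int, D n w = 2 * z%:~R.
  by case: (n) => [|m]; apply: evenE_int.
have z1 : 1 <= (z%:~R : R) by apply: int_ge1; rewrite -dz.
case: z dz z1 => [m|m] dz z1; last first.
  by exfalso; move: z1; rewrite NegzE mulrNz -pmulrn; have := ler0n R m.+1; lra.
have m1 : (0 < m)%N by rewrite -(ltr0n R); move: z1; rewrite -pmulrn; lra.
exists m.-1.
  rewrite truncn_gt_nat prednK //.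
  move: hle; rewrite dz -pmulrn; have := ler0n R m; lra.
have dj : D n w = aj m.-1 by rewrite dz /aj prednK // -pmulrn.
split; [split|exact: hr]; first exact: dj.
change (evenE (gfun (aj m.-1) * expR (X n.+1 w)) = b).
by rewrite -dj -DS.
Qed.

End Main2.


Section Main3.
Variable R : realType.
Local Notation P := (@Lprob R).
Variable X : nat -> R -> R.
Hypothesis Xrv : forall i, rv (X i).
Hypothesis Xind : indep_rvs X.
Hypothesis Xexp : forall i, exp1_distributed (X i).
Local Notation D := (Dseq X).
Local Notation E := (E X).
Local Notation rect := (rect X).
Local Notation aj := (@aj R).

Lemma sum_decomp n b s B : (forall i, i \in s -> measurable (B i)) ->
  P (E n.+1 b `&` rect s B) = \sum_(j < Num.trunc b) P (Fj X n b s B j).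
Proof.
move=> mB; rewrite -LprobU_big; last first.
- by move=> i j; exact: Fj_disj.
- by move=> j; exact: measFj.
apply: (Lprob_null (Z := Z X n)).
- by apply: measI; [exact: measE|exact: meas_rect].
- by apply: measU_big => j; exact: measFj.
- exact: measZ.
- exact: PZ.
- exact: decomp_sup.
- by move=> w [j _]; exact: decomp_sub.
Qed.

Definition Claim n := forall a s B, uniq s -> (forall i, i \in s -> (n < i)%N) ->
  (forall i, i \in s -> measurable (B i)) ->
  P (E n a `&` rect s B) = P (E n a) * P (rect s B).

Lemma E0_eq a : E 0 a = X 0 @^-1` Aset 1 a.
Proof. by apply/seteqP; split => w /=; rewrite /E /Aset /= mul1r. Qed.

Lemma Claim0 : Claim 0.
Proof.
move=> a s B us gs mB.
have ns : 0%N \notin s by apply/negP => /gs.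
rewrite E0_eq Prect_upd // ?rect_nil //; exact: Aset_meas.
Qed.

Lemma Fj_eq n b s B j : n.+1 \notin s ->
  Fj X n b s B j = E n (aj j) `&` rect (n.+1 :: s) (Bup n.+1 (Aset (gfun (aj j)) b) B).
Proof. by move=> ns; rewrite rect_upd // /Fj setIA. Qed.

Lemma Claim_key n : Claim n -> forall b s B, uniq s -> (forall i, i \in s -> (n.+1 < i)%N) ->
  (forall i, i \in s -> measurable (B i)) ->
  P (E n.+1 b `&` rect s B) =
  (\sum_(j < Num.trunc b) P (E n (aj j)) * P (X n.+1 @^-1` Aset (gfun (aj j)) b)) * P (rect s B).
Proof.
move=> C b s B us gs mB.
have ns : n.+1 \notin s by apply/negP => /gs; rewrite ltnn.
rewrite sum_decomp // mulr_suml; apply: eq_bigr => j _.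
rewrite Fj_eq // C //=.
- by rewrite rect_upd // Prect_upd // ?mulrA //; exact: Aset_meas.
- by rewrite ns.
- by move=> i; rewrite in_cons => /orP[/eqP ->//|/gs /ltnW].
- move=> i; rewrite in_cons /Bup; case: eqP => [_ _|_ /= /mB //].
  exact: Aset_meas.
Qed.

Lemma ClaimS n : Claim n -> Claim n.+1.
Proof.
move=> C b s B us gs mB; rewrite (Claim_key C) //.
have h1 : forall i, i \in [::] -> (n.+1 < i)%N by [].
have h2 : forall i, i \in [::] -> measurable (B i) by [].
have := @Claim_key n C b [::] B isT h1 h2.
by rewrite rect_nil setIT LprobT mulr1 => ->.
Qed.

Lemma ClaimAll n : Claim n.
Proof. elim: n => [|n IH]; [exact: Claim0|exact: ClaimS]. Qed.

End Main3.


Section Main4.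
Variable R : realType.
Local Notation P := (@Lprob R).

Lemma nle (x : R) : 0 < x -> ~~ (x <= 0). Proof. by rewrite -ltNge. Qed.
Lemma nle1 (x : R) : x < 1 -> ~~ (1 <= x). Proof. by rewrite -ltNge. Qed.

Lemma GcT (c t : R) : 0 < c -> c <= t -> Gc c t = 1 - c / t.
Proof.
move=> c0 ct; rewrite /Gc ifN; last by apply: nle; lra.
by rewrite ifT // ler_pdivlMr // mul1r.
Qed.

Lemma GcF (c t : R) : 0 < c -> 0 < t -> t < c -> Gc c t = 0.
Proof.
move=> c0 t0 ct; rewrite /Gc ifN; last by apply: nle; lra.
by rewrite ifN //; apply: nle1; rewrite ltr_pdivrMr // mul1r.
Qed.

Lemma PA_val (Y : R -> R) c b : rv Y -> exp1_distributed Y -> 0 < c -> is2Z b ->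
  P (Y @^-1` Aset c b) = Gc c (b + 1) - Gc c (b - 1).
Proof.
move=> hY eY c0 b2; rewrite Aset_split // -(PY_cexp _ hY eY c0) -(PY_cexp _ hY eY c0).
rewrite -LprobD //.
- by apply: measY => //; apply: HL_meas; apply: HL_cexp.
- by apply: measY => //; apply: HL_meas; apply: HL_cexp.
- by move=> w /=; lra.
Qed.

Lemma is2Z_nat k : is2Z ((2 * k)%:R : R).
Proof. by exists k; rewrite natrM -pmulrn. Qed.

Lemma val0 (Y : R -> R) k : rv Y -> exp1_distributed Y -> (0 < k)%N ->
  P (Y @^-1` Aset 1 (2 * k)%:R) = 2 / (((2 * k)%:R - 1) * ((2 * k)%:R + 1)).
Proof.
move=> hY eY k0; rewrite PA_val //; last exact: is2Z_nat.
have K1 : (1 : R) <= k%:R by rewrite ler1n.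
rewrite natrM.
set K := (2%:R * k%:R : R).
have K2 : 2 <= K by rewrite /K; lra.
rewrite !GcT; try lra.
by field; apply/andP; split; apply/eqP; lra.
Qed.

Lemma valT (Y : R -> R) k l : rv Y -> exp1_distributed Y -> (0 < k)%N -> (k <= l)%N ->
  P (Y @^-1` Aset (gfun (2 * k)%:R) (2 * l)%:R) =
   (if l == k then 1 / (2 * k)%:R
        else ((2 * k)%:R - 1) * ((2 * k)%:R + 1) /
             (k%:R * ((2 * l)%:R - 1) * ((2 * l)%:R + 1))).
Proof.
move=> hY eY k0 kl.
have K1 : (1 : R) <= k%:R by rewrite ler1n.
have KL : (k%:R : R) <= l%:R by rewrite ler_nat.
set c := gfun _.
have ce : c = (2 * k%:R) - (2 * k%:R)^-1 by rewrite /c /gfun natrM; field; lra.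
have ki : (2 * k%:R : R)^-1 <= 1/2.
  rewrite -div1r ler_pdivrMr; last by lra.
  lra.
have ki0 : 0 < (2 * k%:R : R)^-1 by rewrite invr_gt0; lra.
have c0 : 0 < c by lra.
rewrite PA_val //; last exact: is2Z_nat.
rewrite !natrM.
have c1 : c <= 2 * l%:R + 1 by lra.
rewrite (GcT c0 c1).
case: eqP => [lk|/eqP lk].
  subst l.
  have c2 : 2 * k%:R - 1 < c by lra.
  rewrite (GcF c0 _ c2); last by lra.
  rewrite subr0 ce; field; lra.
have KL2 : (k%:R : R) + 1 <= l%:R by rewrite natr1 ler_nat ltn_neqAle eq_sym lk kl.
have c3 : c <= 2 * l%:R - 1 by lra.
rewrite (GcT c0 c3) ce; field.
by apply/and3P; split; apply/eqP; lra.
Qed.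

End Main4.


Section Main5.
Variable R : realType.
Local Notation P := (@Lprob R).
Variable X : nat -> R -> R.
Hypothesis Xrv : forall i, rv (X i).
Hypothesis Xind : indep_rvs X.
Hypothesis Xexp : forall i, exp1_distributed (X i).
Local Notation D := (Dseq X).
Local Notation E := (E X).
Local Notation rect := (rect X).

Lemma rect1 i B : rect [:: i] B = X i @^-1` B i.
Proof. by rewrite rect_cons rect_nil setIT. Qed.

Lemma PEE n a b : P (E n.+1 b `&` E n a) = P (E n a) * P (X n.+1 @^-1` Aset (gfun a) b).
Proof.
have -> : E n.+1 b `&` E n a = E n a `&` rect [:: n.+1] (fun _ => Aset (gfun a) b).
  rewrite rect1; apply/seteqP; split => w [h1 h2]; split => //; move: h1 h2; rewrite /E /Aset /=.
    by move=> <- h2; rewrite h2.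
  by move=> h1 <-; rewrite h1.
rewrite (ClaimAll Xrv Xind Xexp) //.
- by rewrite rect1.
- by move=> i; rewrite mem_seq1 => /eqP ->.
- by move=> i _; exact: Aset_meas.
Qed.

Lemma Lcond_trans n a b : 0 < P (E n a) ->
  Lcond (E n.+1 b) (E n a) = P (X n.+1 @^-1` Aset (gfun a) b).
Proof.
move=> p0; rewrite /Lcond PEE mulrAC divff ?mul1r //; exact: lt0r_neq0.
Qed.

Lemma Epos n k : (0 < k)%N -> 0 < P (E n (2 * k)%:R).
Proof.
move=> k0; elim: n => [|n IH].
  rewrite E0_eq val0 //; have K1 : (1 : R) <= k%:R by rewrite ler1n.
  rewrite natrM; apply: divr_gt0 => //; apply: mulr_gt0; lra.
set K := ((2 * k)%:R : R).
have h := Lprob_le (measI (measE Xrv n.+1 K) (measE Xrv n K)) (measE Xrv n.+1 K) (@subIsetl _ (E n.+1 K) (E n K)).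
apply: (lt_le_trans _ h).
rewrite PEE /K (valT (Xrv _) (Xexp _) k0 (leqnn k)) eqxx; apply: mulr_gt0 => //.
by apply: divr_gt0 => //; rewrite ltr0n muln_gt0.
Qed.

Definition Bs (s : nat -> R) (i : nat) :=
  if i is j.+1 then Aset (gfun (s j)) (s i) else Aset 1 (s 0%N).

Lemma H_iff n s w : (forall i, (i <= n)%N -> D i w = s i) <->
  (forall i, (i <= n)%N -> Bs s i (X i w)).
Proof.
elim: n => [|n IH].
  split => h i; rewrite leqn0 => /eqP ->; have := h 0%N (leqnn 0);
    by rewrite /Bs /Aset /= mul1r.
split => h.
  have hn : forall i, (i <= n)%N -> D i w = s i by move=> i le; apply: h; exact: leqW.
  have IHn := proj1 IH hn.
  move=> i; rewrite leq_eqVlt ltnS => /orP[/eqP ->|]; last exact: IHn.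
  rewrite /Bs /Aset /= -(hn n (leqnn n)) -DS; exact: h.
have hn : forall i, (i <= n)%N -> Bs s i (X i w) by move=> i le; apply: h; exact: leqW.
have IHn := proj2 IH hn.
move=> i; rewrite leq_eqVlt ltnS => /orP[/eqP ->|]; last exact: IHn.
rewrite DS (IHn n (leqnn n)); exact: (h n.+1 (leqnn _)).
Qed.

Definition H n (s : nat -> R) := [set w | forall i, (i <= n)%N -> D i w = s i].

Lemma H_rect n s : H n s = rect (iota 0 n.+1) (Bs s).
Proof.
apply/seteqP; split => w h.
  move/H_iff: h => h i; rewrite mem_iota add0n ltnS; exact: h.
apply/H_iff => i le; apply: h; rewrite mem_iota add0n ltnS; exact: le.
Qed.

Lemma measH n s : meas (H n s).
Proof. by rewrite H_rect; apply: meas_rect => // i _; case: i => *; exact: Aset_meas. Qed.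

Lemma EH n s : E n.+1 (s n.+1) `&` H n s = X n.+1 @^-1` Bs s n.+1 `&` H n s.
Proof.
apply/seteqP; split => w [h1 h2]; split => //.
  change (evenE (gfun (s n) * expR (X n.+1 w)) = s n.+1).
  by rewrite -(h2 n (leqnn n)) -DS; exact: h1.
change (D n.+1 w = s n.+1); rewrite DS (h2 n (leqnn n)); exact: h1.
Qed.

Lemma markov_D : markov_chain D.
Proof.
move=> n s hp.
have hp' : 0 < P (H n s) by [].
have hE : 0 < P (E n (s n)).
  apply: (lt_le_trans hp'); apply: Lprob_le; [exact: measH|exact: measE|].
  by move=> w /= h; apply: h.
rewrite (Lcond_trans _ hE).
rewrite /Lcond (_ : [set w | D n.+1 w = s n.+1] `&` _ = E n.+1 (s n.+1) `&` H n s) //.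
rewrite EH H_rect Prect_upd //.
- rewrite -H_rect mulfK //; exact: lt0r_neq0.
- exact: iota_uniq.
- by rewrite mem_iota add0n ltnn andbF.
- exact: Aset_meas.
- by move=> i _; case: i => *; exact: Aset_meas.
Qed.

Lemma homog_D : time_homogeneous D.
Proof.
move=> n m a b pn pm.
rewrite (Lcond_trans _ pn) (Lcond_trans _ pm).
exact: PA_indep.
Qed.

End Main5.

Unset Implicit Arguments. Set Strict Implicit.


Theorem lemma3p1 (R : realType) (X : nat -> R -> R)
  (Xrv : forall i, rv (X i))
  (Xind : indep_rvs X)
  (Xexp : forall i, exp1_distributed (X i)) :
  markov_chain (Dseq X) /\ time_homogeneous (Dseq X) /\
  (forall k : nat, (0 < k)%N ->
     Lprob [set w | Dseq X 0 w = (2 * k)%:R] =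
       2 / (((2 * k)%:R - 1) * ((2 * k)%:R + 1))) /\
  (forall (n k l : nat), (0 < k)%N -> (k <= l)%N ->
     Lcond [set w | Dseq X n.+1 w = (2 * l)%:R] [set w | Dseq X n w = (2 * k)%:R] =
       (if l == k then 1 / (2 * k)%:R
        else ((2 * k)%:R - 1) * ((2 * k)%:R + 1) /
             (k%:R * ((2 * l)%:R - 1) * ((2 * l)%:R + 1)))).
Proof.
split; first exact: (@markov_D R X Xrv Xind Xexp).
split; first exact: (@homog_D R X Xrv Xind Xexp).
split.
  move=> k k0; have := @val0 R (X 0) k (Xrv 0) (Xexp 0) k0.
  by rewrite -E0_eq.
move=> n k l k0 kl.
have := @Lcond_trans R X Xrv Xind Xexp n _ (2 * l)%:R (@Epos R X Xrv Xind Xexp n k k0).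
move=> ->; exact: (@valT R (X n.+1) k l (Xrv _) (Xexp _) k0 kl).
Qed.
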